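(* Consider the faulty-starter delivery problem described in the context, with finisher starting position $(x,y)\neq(0,0)$, $y\ge 0$, and assume $(x,y)\in\overline{D}(1,1)$, i.e. $\sqrt{(x-1)^2+y^2}\le1$. Then the competitive ratio of $\mathcal{A}_d$ is $$\mathrm{CR}_{\mathcal{A}_d}=\begin{cases}\dfrac{x^2+y^2+x}{x\left(1+\sqrt{x^2+y^2}\right)} & \text{if }(x,y)\in\overline{D}(1/2,1/2),\\[2mm] 1+\dfrac{y^2}{x(\sqrt{x}+1)^2} & \text{otherwise.}\end{cases}$$
   Context: Setting. In the plane let $S=(0,0)$ and $T=(1,0)$. A ''starter'' drone carrying a package starts at $S$ at time $0$ and moves at unit speed along $\overline{ST}$ towards $T$. At an unknown time $t\in[0,1]$ it fails and stays forever at $(t,0)$ with the package (at time $s$ the package is at $(\min\{s,t\},0)$). A ''finisher'' drone starts at time $0$ at $P=(x,y)$ with $y\ge0$, moves at unit speed and can stop and turn instantaneously. The package can be handed over only when the drones are co-located; it is delivered at the first time the finisher, carrying the package, is at $T$. An online algorithm $\mathcal{A}$ specifies the finisher's trajectory using only $(x,y)$; $A(t)$ is its delivery time for fail time $t$. $\mathrm{Opt}(t)=\max\{1,\sqrt{(x-t)^2+y^2}+1-t\}$ is the optimal offline delivery time. $\mathrm{CR}_{\mathcal{A}}(t)=A(t)/\mathrm{Opt}(t)$ and $\mathrm{CR}_{\mathcal{A}}=\sup_{0\le t\le1}\mathrm{CR}_{\mathcal{A}}(t)$. $\overline{D}(c,r)$ denotes the closed disk of radius $r$ centered at $(c,0)$.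 Algorithm $\mathcal{A}_d$ (for $x>0$): let $d=(x^2+y^2)/(2x)$ (the point $(d,0)$ satisfies $\sqrt{(x-d)^2+y^2}=d$); the finisher goes straight to $(d,0)$, then moves along the segment towards $S$ until it finds the package, then goes to $T$. *)

(* Defs.v *)
From Stdlib Require Import Reals.
Open Scope R_scope.

Definition dist2 (a1 a2 b1 b2 : R) : R := sqrt ((a1 - b1) ^ 2 + (a2 - b2) ^ 2).

Definition in_disk (c r x y : R) : Prop := dist2 x y c 0 <= r.

(* Optimal offline delivery time for fail time t. *)
Definition Opt (x y t : R) : R := Rmax 1 (dist2 x y t 0 + 1 - t).

Definition dpt (x y : R) : R := (x ^ 2 + y ^ 2) / (2 * x).

(* Delivery time of A_d for fail time t: the finisher walks straight from
   P=(x,y) to (d,0); at time dist(P,(d,0)) (= d) the package is at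
   (min t d, 0), so the finisher walks back d - min t d along the segment
   towards S to reach it, and then carries it to T, a further 1 - min t d. *)
Definition A_d (x y t : R) : R :=
  let d := dpt x y in
  dist2 x y d 0 + (d - Rmin t d) + (1 - Rmin t d).

Definition CR_t (x y t : R) : R := A_d x y t / Opt x y t.

Definition CR_set (x y : R) : R -> Prop :=
  fun r => exists t, 0 <= t <= 1 /\ r = CR_t x y t.

Definition CR_is (x y v : R) : Prop := is_lub (CR_set x y) v.

(* Main.v *)
Require Import Defs.
From Stdlib Require Import Reals Lra Psatz.
Open Scope R_scope.

Lemma div_le (A O V : R) : 0 < O -> A <= V * O -> A / O <= V.
Proof.
  intros HO H. unfold Rdiv. apply Rmult_le_reg_r with O; auto.
  rewrite Rmult_assoc, Rinv_l by lra. lra.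
Qed.

Lemma sq_le a b : 0 <= b -> a * a <= b * b -> a <= b.
Proof.
  intros Hb H. destruct (Rle_dec a b) as [?|Hn]; auto.
  assert (b * b < a * a) by (apply Rmult_le_0_lt_compat; lra). lra.
Qed.

Lemma Dfacts x y t : 0 <= dist2 x y t 0 /\
  dist2 x y t 0 * dist2 x y t 0 = (x-t)^2 + y^2.
Proof.
  unfold dist2. split. apply sqrt_pos. rewrite sqrt_sqrt.
  ring. apply Rplus_le_le_0_compat; apply pow2_ge_0.
Qed.

Lemma dist_d x y : 0 < x -> dist2 x y (dpt x y) 0 = dpt x y.
Proof.
  intros Hx. unfold dist2.
  assert (0 <= dpt x y).
  { unfold dpt. apply Rmult_le_pos. nra. left. apply Rinv_0_lt_compat. lra. }
  replace ((x - dpt x y) ^ 2 + (y - 0) ^ 2) with (dpt x y ^ 2).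
  now apply sqrt_pow2.
  unfold dpt. field. lra.
Qed.

Lemma D_ge_t x y t : 0 < x -> 0 <= t <= dpt x y -> t <= dist2 x y t 0.
Proof.
  intros Hx Ht. destruct (Dfacts x y t) as [H0 H1].
  assert (2 * x * dpt x y = x^2 + y^2) by (unfold dpt; field; lra).
  nra.
Qed.

Lemma ub_lemma x y V : 0 < x -> 1 <= V ->
  (forall t, 0 <= t <= dpt x y ->
     2 * dpt x y + 1 - 2 * t <= V * (dist2 x y t 0 + 1 - t)) ->
  is_upper_bound (CR_set x y) V.
Proof.
  intros Hx HV H r [t [Ht ->]]. unfold CR_t, A_d, Opt.
  rewrite dist_d by lra.
  assert (HO1 := Rmax_l 1 (dist2 x y t 0 + 1 - t)).
  assert (HO2 := Rmax_r 1 (dist2 x y t 0 + 1 - t)).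
  apply div_le. lra.
  destruct (Rle_dec t (dpt x y)) as [Hle|Hgt].
  - rewrite Rmin_left by lra.
    assert (0 <= dpt x y).
    { unfold dpt. apply Rmult_le_pos. nra. left. apply Rinv_0_lt_compat. lra. }
    specialize (H t (conj (proj1 Ht) Hle)). nra.
  - rewrite Rmin_right by lra. nra.
Qed.

Lemma attain x y V t : 0 < x -> 0 <= t <= dpt x y -> dpt x y <= 1 ->
  2 * dpt x y + 1 - 2 * t = V * (dist2 x y t 0 + 1 - t) ->
  CR_set x y V.
Proof.
  intros Hx Ht Hd H. exists t. split. lra.
  unfold CR_t, A_d, Opt. rewrite dist_d by lra. rewrite Rmin_left by lra.
  assert (Hg := D_ge_t x y t Hx Ht).
  rewrite Rmax_right by lra.
  replace (dpt x y + (dpt x y - t) + (1 - t)) with (2 * dpt x y + 1 - 2 * t) by ring.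
  rewrite H. field. lra.
Qed.

Lemma lub_of x y V t : 0 < x -> 1 <= V -> 0 <= t <= dpt x y -> dpt x y <= 1 ->
  2 * dpt x y + 1 - 2 * t = V * (dist2 x y t 0 + 1 - t) ->
  (forall t, 0 <= t <= dpt x y ->
     2 * dpt x y + 1 - 2 * t <= V * (dist2 x y t 0 + 1 - t)) ->
  CR_is x y V.
Proof.
  intros. split. now apply ub_lemma.
  intros b Hb. apply Hb. eapply attain; eauto.
Qed.

Theorem theorem3 (x y : R) :
  (x, y) <> (0, 0) -> 0 <= y -> in_disk 1 1 x y ->
  (in_disk (1/2) (1/2) x y ->
     CR_is x y ((x ^ 2 + y ^ 2 + x) / (x * (1 + sqrt (x ^ 2 + y ^ 2))))) /\
  (~ in_disk (1/2) (1/2) x y ->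
     CR_is x y (1 + y ^ 2 / (x * (sqrt x + 1) ^ 2))).
Proof.
  intros Hne Hy Hdisk.
  assert (Hq : (x-1)^2 + y^2 <= 1).
  { unfold in_disk, dist2 in Hdisk.
    assert (Hs := sqrt_pos ((x - 1) ^ 2 + (y - 0) ^ 2)).
    assert (Hs2 := sqrt_sqrt ((x - 1) ^ 2 + (y - 0) ^ 2)).
    assert (0 <= (x - 1) ^ 2 + (y - 0) ^ 2) by (apply Rplus_le_le_0_compat; apply pow2_ge_0). nra. }
  assert (Hx : 0 < x).
  { destruct (Rtotal_order x 0) as [H|[H|H]]; [nra| |lra].
    subst. assert (y = 0) by nra. subst. now elim Hne. }
  assert (Hd1 : dpt x y <= 1).
  { unfold dpt. apply div_le. lra. nra. }
  assert (Hdx : 2 * x * dpt x y = x^2 + y^2) by (unfold dpt; field; lra).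
  split.
  - intros Hin.
    assert (Hq2 : x^2 + y^2 <= x).
    { unfold in_disk, dist2 in Hin.
      assert (Hs := sqrt_pos ((x - 1/2) ^ 2 + (y - 0) ^ 2)).
      assert (Hs2 := sqrt_sqrt ((x - 1/2) ^ 2 + (y - 0) ^ 2)).
      assert (0 <= (x - 1/2) ^ 2 + (y - 0) ^ 2) by (apply Rplus_le_le_0_compat; apply pow2_ge_0). nra. }
    set (r := sqrt (x^2 + y^2)).
    assert (Hr0 : 0 <= r) by apply sqrt_pos.
    assert (Hr2 : r * r = x^2 + y^2) by (apply sqrt_sqrt; nra).
    assert (Hrx : x <= r) by nra.
    set (V := (x ^ 2 + y ^ 2 + x) / (x * (1 + r))).
    assert (HV : V * (x * (1 + r)) = r * r + x) by (unfold V; rewrite Hr2; field; nra).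
    assert (HV1 : 1 <= V).
    { assert (r * r >= x * r) by nra.
      destruct (Rle_dec 1 V) as [?|Hn]; auto.
      assert (0 < (1 - V) * (x * (1 + r))) by (apply Rmult_lt_0_compat; nra).
      nra. }
    assert (HVd : 2 * dpt x y + 1 = V * (1 + r)).
    { apply Rmult_eq_reg_l with x; [|lra]. nra. }
    assert (Hkey : V * (x + r) <= 2 * r).
    { assert ((r - x) * (r * r - x) <= 0) by nra.
      assert (V * (x + r) * (x * (1 + r)) <= 2 * r * (x * (1 + r))) by nra.
      apply Rmult_le_reg_r with (x * (1 + r)); nra. }
    apply lub_of with 0; auto.
    + split; [lra|]. unfold dpt. apply Rmult_le_pos. nra. left. apply Rinv_0_lt_compat. lra.
    + unfold dist2. replace ((x - 0) ^ 2 + (y - 0) ^ 2) with (x^2+y^2) by ring.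
      fold r. lra.
    + intros t Ht. destruct (Dfacts x y t) as [HD0 HD2].
      set (D := dist2 x y t 0) in *.
      set (L := V * r + (V - 2) * t).
      assert (HL : 2 * dpt x y + 1 - 2 * t - V * (1 - t) = L) by (unfold L; nra).
      assert (HQ : V^2 * (D * D) - L^2 = t * (4 * (V - 1) * t + 2 * V * (2 * r - V * (x + r)))).
      { rewrite HD2. unfold L.
        replace (V ^ 2 * ((x - t) ^ 2 + y ^ 2)) with
          (V^2 * (r * r - 2 * x * t + t^2)) by (rewrite Hr2; ring). ring. }
      assert (0 <= t * (4 * (V - 1) * t + 2 * V * (2 * r - V * (x + r)))).
      { apply Rmult_le_pos. lra. nra. }
      assert (0 <= V * D) by (apply Rmult_le_pos; lra).
      assert (L <= V * D).
      { destruct (Rle_dec L 0); [lra|].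
        assert (L * L <= (V * D) * (V * D)) by (simpl in HQ; nra).
        nra. }
      lra.
  - intros Hout.
    assert (Hq2 : x^2 + y^2 > x).
    { unfold in_disk, dist2 in Hout.
      assert (Hs := sqrt_pos ((x - 1/2) ^ 2 + (y - 0) ^ 2)).
      assert (Hs2 := sqrt_sqrt ((x - 1/2) ^ 2 + (y - 0) ^ 2)).
      assert (0 <= (x - 1/2) ^ 2 + (y - 0) ^ 2) by (apply Rplus_le_le_0_compat; apply pow2_ge_0). nra. }
    set (s := sqrt x) in *.
    assert (Hs0 : 0 < s) by (apply sqrt_lt_R0; lra).
    assert (Hxs : x = s^2) by (unfold s; rewrite pow2_sqrt; lra).
    clearbody s. subst x.
    set (V := 1 + y ^ 2 / (s ^ 2 * (s + 1) ^ 2)).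
    assert (HV1 : 1 <= V).
    { unfold V. assert (0 <= y ^ 2 / (s ^ 2 * (s + 1) ^ 2)).
      { apply Rmult_le_pos. nra. left. apply Rinv_0_lt_compat. nra. } lra. }
    set (b := V - 2).
    set (c := 2 * y / (s * (1 + s))).
    assert (E2 : V^2 = b^2 + c^2) by (unfold b, c, V; field; lra).
    assert (E1 : forall t, 2 * dpt (s^2) y + 1 - 2 * t - V * (1 - t) = b * (t - s^2) + c * y).
    { intros t. unfold b, c, V, dpt. field. lra. }
    assert (HCS : forall t, (b * (t - s^2) + c * y)^2 <= V^2 * (dist2 (s^2) y t 0 * dist2 (s^2) y t 0)).
    { intros t. destruct (Dfacts (s^2) y t) as [_ HD2]. rewrite HD2, E2.
      assert (0 <= (b * y - c * (t - s^2))^2) by apply pow2_ge_0. nra. }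
    set (ts := s^2 + b * s * (1 + s) / 2).
    assert (Hts : ts = (s^4 - s^2 + y^2) / (2 * s * (s + 1))) by (unfold ts, b, V; field; lra).
    assert (Hdts : dpt (s^2) y - ts = (s^4 + s^3 + y^2) / (2 * s^2 * (s + 1))).
    { rewrite Hts. unfold dpt. field. lra. }
    apply lub_of with ts; auto; try lra.
    + split.
      * rewrite Hts. apply Rmult_le_pos. nra. left. apply Rinv_0_lt_compat. nra.
      * assert (0 <= (s^4 + s^3 + y^2) / (2 * s^2 * (s + 1))).
        { apply Rmult_le_pos. nra. left. apply Rinv_0_lt_compat. nra. } lra.
    + destruct (Dfacts (s^2) y ts) as [HD0 HD2].
      set (D := dist2 (s^2) y ts 0) in *.
      assert (Hz : b * y - c * (ts - s^2) = 0) by (unfold ts, c; field; lra).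
      assert (HLeq : (b * (ts - s^2) + c * y)^2 = V^2 * (D * D)).
      { rewrite HD2, E2. nra. }
      assert (HL0 : 0 <= b * (ts - s^2) + c * y).
      { replace (b * (ts - s^2) + c * y) with (b^2 * s * (1+s) / 2 + 2 * y^2 / (s * (1 + s)))
          by (unfold ts, c; field; lra).
        assert (0 <= 2 * y^2 / (s * (1 + s))).
        { apply Rmult_le_pos. nra. left. apply Rinv_0_lt_compat. nra. }
        assert (0 <= b^2 * s * (1+s) / 2) by (apply Rmult_le_pos; [|lra]; apply Rmult_le_pos; nra).
        lra. }
      assert (0 <= V * D) by (apply Rmult_le_pos; lra).
      assert (b * (ts - s^2) + c * y = V * D).
      { apply Rsqr_inj; auto. unfold Rsqr. simpl in HLeq. lra. }
      specialize (E1 ts). lra.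
    + intros t Ht. specialize (E1 t). specialize (HCS t).
      destruct (Dfacts (s^2) y t) as [HD0 _].
      assert (0 <= V * dist2 (s ^ 2) y t 0) by (apply Rmult_le_pos; lra).
      assert (b * (t - s ^ 2) + c * y <= V * dist2 (s ^ 2) y t 0).
      { apply sq_le; auto.
        replace ((b * (t - s ^ 2) + c * y) * (b * (t - s ^ 2) + c * y)) with
          ((b * (t - s ^ 2) + c * y) ^ 2) by ring.
        replace (V * dist2 (s ^ 2) y t 0 * (V * dist2 (s ^ 2) y t 0)) with
          (V ^ 2 * (dist2 (s ^ 2) y t 0 * dist2 (s ^ 2) y t 0)) by ring.
        exact HCS. }
      lra.
Qed.
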